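(* Let $b\ge2$. Define the estimated MMD loss $$\mathsf{L}'^k_{b,n}(\theta,u_{1:b})=-\frac{2}{nb}\sum_{i=1}^n\sum_{j=1}^bk(u_j,y_i)+\frac{1}{b(b-1)}\sum_{j=1}^b\sum_{j'\ne j}k(u_j,u_{j'}),$$ and, with $v_{1:b}\sim p_v$ i.i.d. and $u_k=G_\theta(v_k)$, $$\varphi_{b,n}(\theta)=\sum_{k=1}^b\sum_{l=1}^p\Big[\frac{\partial}{\partial u_{kl}}\mathsf{L}'^k_{b,n}(\theta,u_{1:b})\Big]_{u_{1:b}=G_\theta(v_{1:b})}\nabla_\theta G_{\theta,l}(v_k).$$ Then $\mathbb{E}_{v_{1:b}\sim p_v}[\varphi_{b,n}(\theta)]=\nabla_\theta\mathsf{L}^k_n(\theta)$. Moreover, suppose there exist $Q_j:\mathbb{R}^p\times\Theta\to\mathbb{R}$ and $R_j:\Theta\to\mathbb{R}$, $j=1,\dots,d$, such that for all $v,v'$ in the support of $p_v$ and all $y$, $$Q_j(y,\theta)\ge\Big|\sum_{l=1}^p\Big[\frac{\partial}{\partial u_l}k(y,u)\Big]_{u=G_\theta(v)}\frac{\partial}{\partial\theta_j}G_{\theta,l}(v)\Big|,$$ $$R_j(\theta)\ge\Big|\sum_{l=1}^p\Big[\frac{\partial}{\partial u_l}k(u,G_\theta(v'))\Big]_{u=G_\theta(v)}\frac{\partial}{\partial\theta_j}G_{\theta,l}(v)+\Big[\frac{\partial}{\partial u'_l}k(G_\theta(v),u')\Big]_{u'=G_\theta(v')}\frac{\partial}{\partial\theta_j}G_{\theta,l}(v')\Big|.$$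 Then, for $\hat\lambda_j(\theta,\nu)=\max\{\nu_j[-\nabla_\theta\log\pi(\theta)+\omega\varphi_{b,n}(\theta)]_j,0\}$, for all $v_{1:b}$, $\theta$ and $\nu\in\{-1,1\}^d$, $$\hat\lambda_j(\theta,\nu)\le\Big|\frac{\partial}{\partial\theta_j}\log\pi(\theta)\Big|+\omega\frac{2}{n}\sum_{i=1}^nQ_j(y_i,\theta)+\omega R_j(\theta).$$
   Context: Observations $y_1,\dots,y_n\in\mathbb{R}^p$. $k:\mathbb{R}^p\times\mathbb{R}^p\to\mathbb{R}_{\ge0}$ is a symmetric positive-definite, differentiable kernel. The model $P_\theta$, $\theta\in\Theta\subseteq\mathbb{R}^d$, is given by a generator: $u\sim P_\theta$ is obtained as $u=G_\theta(v)=(G_{\theta,1}(v),\dots,G_{\theta,p}(v))$ with $v\sim p_v$, where $p_v$ does not depend on $\theta$ and $G_\theta(v)$ is differentiable in $\theta$; differentiation in $\theta$ is assumed interchangeable with expectation over $v$. The MMD loss is $\mathsf{L}^k_n(\theta)=-\frac2n\sum_{i=1}^n\mathbb{E}_{U\sim P_\theta}[k(U,y_i)]+\mathbb{E}_{U,U'\sim P_\theta\text{ i.i.d.}}[k(U,U')]$. $\pi$ is a differentiable prior density and $\omega>0$. *)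

(* Defs.v *)
From HB Require Import structures.
From mathcomp Require Import all_boot all_order all_algebra.
From mathcomp Require Import all_classical all_reals all_analysis.
Set Implicit Arguments. Unset Strict Implicit. Unset Printing Implicit Defensive.
Import Order.TTheory GRing.Theory Num.Theory.
Import numFieldNormedType.Exports.
Local Open Scope classical_set_scope.
Local Open Scope ring_scope.

Definition partial (R : realType) (m : nat) (f : 'rV[R]_m -> R) (l : 'I_m)
  (x : 'rV[R]_m) : R := derive f x (delta_mx 0 l).

Definition pd_kernel (R : realType) (p : nat) (k : 'rV[R]_p -> 'rV[R]_p -> R) :=
  forall (m : nat) (x : 'I_m -> 'rV[R]_p) (c : 'I_m -> R),
    0 <= \sum_(i < m) \sum_(j < m) c i * c j * k (x i) (x j).

(* estimated MMD loss L'_{b,n}, with u_{1:b} stored as the rows of a b x p matrix *)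
Definition Lhat (R : realType) (p n b : nat) (k : 'rV[R]_p -> 'rV[R]_p -> R)
  (y : 'I_n -> 'rV[R]_p) (U : 'M[R]_(b, p)) : R :=
  - (2 / (n%:R * b%:R)) * (\sum_(i < n) \sum_(j < b) k (row j U) (y i))
  + (b%:R * (b%:R - 1))^-1 *
      (\sum_(j < b) \sum_(j' < b | j' != j) k (row j U) (row j' U)).

Definition Gmat (R : realType) (V : Type) (p d b : nat)
  (G : 'rV[R]_d -> V -> 'rV[R]_p) (theta : 'rV[R]_d) (v : 'I_b -> V) : 'M[R]_(b, p) :=
  \matrix_(kk < b, l < p) G theta (v kk) 0 l.

Definition phi (R : realType) (V : Type) (p d n b : nat)
  (k : 'rV[R]_p -> 'rV[R]_p -> R) (y : 'I_n -> 'rV[R]_p)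
  (G : 'rV[R]_d -> V -> 'rV[R]_p) (theta : 'rV[R]_d) (v : 'I_b -> V) : 'rV[R]_d :=
  \row_(j < d) \sum_(kk < b) \sum_(l < p)
     derive (Lhat k y) (Gmat G theta v) (delta_mx kk l) *
     partial (fun t => G t (v kk) 0 l) j theta.

(* MMD loss L^k_n(theta) with P_theta = law of G_theta(v), v ~ P *)
Definition MMDloss (R : realType) (dV : measure_display) (V : measurableType dV)
  (P : probability V R) (p d n : nat) (k : 'rV[R]_p -> 'rV[R]_p -> R)
  (y : 'I_n -> 'rV[R]_p) (G : 'rV[R]_d -> V -> 'rV[R]_p) (theta : 'rV[R]_d) : R :=
  - (2 / n%:R) * (\sum_(i < n) Rintegral P setT (fun v => k (G theta v) (y i)))
  + Rintegral (P \x P)%E setT (fun w => k (G theta w.1) (G theta w.2)).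

(* X_1, ..., X_b : Omega -> V are i.i.d. with law P (mutual independence
   as the product rule on measurable rectangles) *)
Definition iid (R : realType) (dO dV : measure_display) (Omega : measurableType dO)
  (V : measurableType dV) (PO : probability Omega R) (P : probability V R) (b : nat)
  (X : 'I_b -> Omega -> V) : Prop :=
  (forall kk, measurable_fun setT (X kk)) /\
  forall A : 'I_b -> set V, (forall kk, measurable (A kk)) ->
    PO (\bigcap_(kk in [set: 'I_b]) (X kk @^-1` A kk)) =
    \big[mule/1%E]_(kk < b) P (A kk).

(* Main.v *)
Require Import Defs.
From HB Require Import structures.
From mathcomp Require Import all_boot all_order all_algebra.
From mathcomp Require Import all_classical all_reals all_analysis.
From mathcomp Require Import measurable_realfun.
From mathcomp Require Import ring lra.
Import Order.TTheory GRing.Theory Num.Theory.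
Import numFieldNormedType.Exports.
Local Open Scope classical_set_scope.
Local Open Scope ring_scope.
Set Implicit Arguments. Unset Strict Implicit.

Lemma continuous_rowf (R : realType) m n (j : 'I_m) :
  continuous (fun U : 'M[R]_(m, n) => row j U).
Proof.
move=> u A /nbhs_ballP[e /= e0 eA].
apply/nbhs_ballP; exists e => //= v [_ uv]; apply: eA; split => // i l.
by apply: (le_lt_trans _ (uv j l)); rewrite !mxE.
Qed.

Lemma differentiable_rowf (R : realType) m n (j : 'I_m) (U : 'M[R]_(m, n)) :
  differentiable (fun U : 'M[R]_(m, n) => row j U) U.
Proof. by apply: (linear_differentiable (f := row j)); exact: continuous_rowf. Qed.

Lemma diff_rowf (R : realType) m n (j : 'I_m) (U : 'M[R]_(m, n)) :
  'd (fun U : 'M[R]_(m, n) => row j U) U = row j :> (_ -> _).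
Proof. by apply: (diff_lin (f := row j)); exact: continuous_rowf. Qed.

Lemma diff_idf (R : realType) (V : normedModType R) (x : V) :
  'd (fun z : V => z) x = id :> (V -> V).
Proof. by rewrite diff_val. Qed.

Lemma differentiable_idf (R : realType) (V : normedModType R) (x : V) :
  differentiable (fun z : V => z) x.
Proof. exact: ex_diff. Qed.


Lemma derive_compf (R : realType) (U V : normedModType R) (f : U -> V)
  (g : V -> R^o) x v :
  differentiable f x -> differentiable g (f x) ->
  derive (fun z => g (f z)) x v = 'd g (f x) ('d f x v).
Proof.
move=> df dg.
rewrite (_ : (fun z => g (f z)) = g \o f); last by [].
rewrite deriveE; last exact: differentiable_comp.
by rewrite diff_comp.
Qed.

Lemma is_derive_sumseq (R : realType) (U : normedModType R) (I : Type)
  (r : seq I) (P : pred I) (f : I -> U -> R^o) (df : I -> R) x v :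
  (forall i, is_derive x v (f i) (df i)) ->
  is_derive x v (fun z => \sum_(i <- r | P i) f i z) (\sum_(i <- r | P i) df i).
Proof.
move=> H; elim: r => [|a r IH].
  rewrite (_ : (fun z => _) = cst 0); last by apply/funext => z; rewrite big_nil.
  rewrite big_nil. exact: is_derive_cst.
rewrite (_ : (fun z => _) = fun z => if P a then f a z + \sum_(i <- r | P i) f i z
   else \sum_(i <- r | P i) f i z); last by apply/funext => z; rewrite big_cons.
rewrite big_cons.
case: (P a); last exact: IH.
rewrite (_ : (fun z => _) = f a + (fun z => \sum_(i <- r | P i) f i z)); last by [].
exact: is_deriveD.
Qed.

Lemma is_derive_lin2 (R : realType) (U : normedModType R) (f g : U -> R^o) a c
  df dg x v : is_derive x v f df -> is_derive x v g dg ->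
  is_derive x v (fun z => a * f z + c * g z) (a * df + c * dg).
Proof.
move=> Hf Hg.
rewrite (_ : (fun z => _) = a \*: f + c \*: g); last by [].
exact: is_deriveD.
Qed.

Lemma is_derive_diff (R : realType) (U : normedModType R) (f : U -> R^o) x v :
  differentiable f x -> is_derive x v f ('d f x v).
Proof. by move=> df; apply: DeriveDef; [exact: diff_derivable| exact: deriveE]. Qed.

Lemma differentiable_sumseq (R : realType) (U : normedModType R) (I : Type)
  (r : seq I) (P : pred I) (f : I -> U -> R^o) x :
  (forall i, differentiable (f i) x) ->
  differentiable (fun z => \sum_(i <- r | P i) f i z) x.
Proof.
move=> H; elim: r => [|a r IH].
  rewrite (_ : (fun z => _) = cst 0); last by apply/funext => z; rewrite big_nil.
  exact: differentiable_cst.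
rewrite (_ : (fun z => _) = fun z => if P a then f a z + \sum_(i <- r | P i) f i z
   else \sum_(i <- r | P i) f i z); last by apply/funext => z; rewrite big_cons.
case: (P a); last exact: IH.
rewrite (_ : (fun z => _) = f a + (fun z => \sum_(i <- r | P i) f i z)); last by [].
exact: differentiableD.
Qed.

Lemma differentiable_lin2 (R : realType) (U : normedModType R) (f g : U -> R^o) a c x :
  differentiable f x -> differentiable g x ->
  differentiable (fun z => a * f z + c * g z) x.
Proof.
move=> Hf Hg.
rewrite (_ : (fun z => _) = a \*: f + c \*: g); last by [].
by apply: differentiableD; apply: differentiableZ.
Qed.

Definition kF {R : realType} {p} (k : 'rV[R]_p -> 'rV[R]_p -> R) :=
  fun z : 'rV[R]_p * 'rV[R]_p => k z.1 z.2.

Lemma differentiable_k2 (R : realType) (U : normedModType R) p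
  (k : 'rV[R]_p -> 'rV[R]_p -> R)
  (hkdiff : forall x x', differentiable (fun z : 'rV[R]_p * 'rV[R]_p => k z.1 z.2) (x, x'))
  (f g : U -> 'rV[R]_p) x :
  differentiable f x -> differentiable g x ->
  differentiable (fun z => k (f z) (g z)) x.
Proof.
move=> df dg.
rewrite (_ : (fun z => _) = kF k \o (fun z => (f z, g z))); last by [].
apply: differentiable_comp; first exact: differentiable_pair.
exact: hkdiff.
Qed.

Lemma derive_k2 (R : realType) (U : normedModType R) p
  (k : 'rV[R]_p -> 'rV[R]_p -> R)
  (hkdiff : forall x x', differentiable (fun z : 'rV[R]_p * 'rV[R]_p => k z.1 z.2) (x, x'))
  (f g : U -> 'rV[R]_p) x v :
  differentiable f x -> differentiable g x ->
  derive (fun z => k (f z) (g z)) x v = 'd (kF k) (f x, g x) ('d f x v, 'd g x v).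
Proof.
move=> df dg.
rewrite (_ : (fun z => _) = fun z => kF k ((fun z => (f z, g z)) z)); last by [].
rewrite derive_compf; first by rewrite diff_pair.
  exact: differentiable_pair.
exact: hkdiff.
Qed.

Lemma diff_cstf (R : realType) (U W : normedModType R) (c : W) (x v : U) :
  'd (fun _ : U => c) x v = 0.
Proof. by have := diff_cst c x => /(congr1 (fun h => h v)). Qed.

Lemma fst_sum (R : realType) p m (F : 'I_m -> 'rV[R]_p * 'rV[R]_p) :
  (\sum_(l < m) F l).1 = \sum_(l < m) (F l).1.
Proof. by apply: (big_morph fst (id1 := 0) (op1 := +%R)). Qed.

Lemma snd_sum (R : realType) p m (F : 'I_m -> 'rV[R]_p * 'rV[R]_p) :
  (\sum_(l < m) F l).2 = \sum_(l < m) (F l).2.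
Proof. by apply: (big_morph snd (id1 := 0) (op1 := +%R)). Qed.

Lemma lin_expand (R : realType) p (L : {linear ('rV[R]_p * 'rV[R]_p)%type -> R^o})
  (w w' : 'rV[R]_p) :
  L (w, w') = \sum_(l < p) (w 0 l * L (delta_mx 0 l, 0) + w' 0 l * L (0, delta_mx 0 l)).
Proof.
have -> : (w, w') = \sum_(l < p) (w 0 l *: (delta_mx 0 l, 0) + w' 0 l *: (0, delta_mx 0 l)).
  set S := \sum_(l < p) _.
  have -> : S = (S.1, S.2) by case: S.
  rewrite /S; congr pair.
    rewrite fst_sum /= [LHS]row_sum_delta; apply: eq_bigr => l _ /=.
    by rewrite scaler0 addr0.
  rewrite snd_sum /= [LHS]row_sum_delta; apply: eq_bigr => l _ /=.
  by rewrite scaler0 add0r.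
rewrite linear_sum; apply: eq_bigr => l _.
by rewrite linearD !linearZ.
Qed.

Lemma differentiable_sumseqW (R : realType) (U W : normedModType R) (I : Type)
  (r : seq I) (P : pred I) (f : I -> U -> W) x :
  (forall i, differentiable (f i) x) ->
  differentiable (fun z => \sum_(i <- r | P i) f i z) x.
Proof.
move=> H; elim: r => [|a r IH].
  rewrite (_ : (fun z => _) = cst 0); last by apply/funext => z; rewrite big_nil.
  exact: differentiable_cst.
rewrite (_ : (fun z => _) = fun z => if P a then f a z + \sum_(i <- r | P i) f i z
   else \sum_(i <- r | P i) f i z); last by apply/funext => z; rewrite big_cons.
case: (P a); last exact: IH.
rewrite (_ : (fun z => _) = f a + (fun z => \sum_(i <- r | P i) f i z)); last by [].
exact: differentiableD.
Qed.

Lemma is_derive_der (R : realType) (U : normedModType R) (f : U -> R^o) x v :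
  differentiable f x -> is_derive x v f (derive f x v).
Proof. by move=> df; apply: DeriveDef; [exact: diff_derivable|]. Qed.


Lemma differentiable_cstf (R : realType) (U W : normedModType R) (c : W) (x : U) :
  differentiable (fun _ : U => c) x.
Proof. exact: (differentiable_cst c x). Qed.
Lemma diff_pair_cst (R : realType) (U V W : normedModType R) (f : U -> V) (c : W) x :
  differentiable f x -> 'd (fun z => (f z, c)) x = (fun v => ('d f x v, 0)) :> (U -> V * W).
Proof.
move=> df; rewrite diff_pair; try exact: differentiable_cstf; try exact: df.
apply/funext => v; by rewrite diff_cstf.
Qed.
Lemma diff_pair_cstl (R : realType) (U V W : normedModType R) (f : U -> V) (c : W) x :
  differentiable f x -> 'd (fun z => (c, f z)) x = (fun v => (0, 'd f x v)) :> (U -> W * V).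
Proof.
move=> df; rewrite diff_pair; try exact: differentiable_cstf; try exact: df.
apply/funext => v; by rewrite diff_cstf.
Qed.
Lemma derive_k2c (R : realType) (U : normedModType R) p
  (k : 'rV[R]_p -> 'rV[R]_p -> R)
  (hkdiff : forall x x', differentiable (fun z : 'rV[R]_p * 'rV[R]_p => k z.1 z.2) (x, x'))
  (f : U -> 'rV[R]_p) c x v :
  differentiable f x ->
  derive (fun z => k (f z) c) x v = 'd (kF k) (f x, c) ('d f x v, 0).
Proof.
move=> df.
rewrite (_ : (fun z => _) = fun z => kF k ((fun z => (f z, c)) z)); last by [].
rewrite derive_compf; first by rewrite diff_pair_cst.
  apply: differentiable_pair => //; exact: differentiable_cstf.
exact: hkdiff.
Qed.
Lemma derive_k2cl (R : realType) (U : normedModType R) p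
  (k : 'rV[R]_p -> 'rV[R]_p -> R)
  (hkdiff : forall x x', differentiable (fun z : 'rV[R]_p * 'rV[R]_p => k z.1 z.2) (x, x'))
  (f : U -> 'rV[R]_p) c x v :
  differentiable f x ->
  derive (fun z => k c (f z)) x v = 'd (kF k) (c, f x) (0, 'd f x v).
Proof.
move=> df.
rewrite (_ : (fun z => _) = fun z => kF k ((fun z => (c, f z)) z)); last by [].
rewrite derive_compf; first by rewrite diff_pair_cstl.
  apply: differentiable_pair => //; exact: differentiable_cstf.
exact: hkdiff.
Qed.

Lemma partial1 (R : realType) p (k : 'rV[R]_p -> 'rV[R]_p -> R)
  (hkdiff : forall x x', differentiable (fun z : 'rV[R]_p * 'rV[R]_p => k z.1 z.2) (x, x'))
  a c l : partial (fun u => k u c) l a = 'd (kF k) (a, c) (delta_mx 0 l, 0).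
Proof.
rewrite /partial (derive_k2c hkdiff (f := fun z => z)); last exact: differentiable_idf.
by rewrite diff_idf.
Qed.

Lemma partial2 (R : realType) p (k : 'rV[R]_p -> 'rV[R]_p -> R)
  (hkdiff : forall x x', differentiable (fun z : 'rV[R]_p * 'rV[R]_p => k z.1 z.2) (x, x'))
  a c l : partial (fun u => k a u) l c = 'd (kF k) (a, c) (0, delta_mx 0 l).
Proof.
rewrite /partial (derive_k2cl hkdiff (f := fun z => z)); last exact: differentiable_idf.
by rewrite diff_idf.
Qed.

Lemma partial_coord (R : realType) d p (g : 'rV[R]_d -> 'rV[R]_p) (j : 'I_d) l th :
  differentiable g th ->
  partial (fun t => g t 0 l) j th = 'd g th (delta_mx 0 j) 0 l.
Proof.
move=> dg; rewrite /partial.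
have := derive_mx (diff_derivable (v := delta_mx 0 j) dg).
rewrite deriveE // => ->; by rewrite mxE.
Qed.

Lemma chainA (R : realType) d p (k : 'rV[R]_p -> 'rV[R]_p -> R)
  (hkdiff : forall x x', differentiable (fun z : 'rV[R]_p * 'rV[R]_p => k z.1 z.2) (x, x'))
  (g : 'rV[R]_d -> 'rV[R]_p) (c : 'rV[R]_p) (j : 'I_d) th :
  differentiable g th ->
  partial (fun t => k (g t) c) j th =
  \sum_(l < p) partial (fun u => k u c) l (g th) * partial (fun t => g t 0 l) j th.
Proof.
move=> dg; rewrite {1}/partial (derive_k2c hkdiff (f := g)) //.
rewrite lin_expand; apply: eq_bigr => l _.
rewrite (partial_coord _ _ dg).
rewrite (partial1 hkdiff (g th) c l).
rewrite (_ : (0 : 'rV[R]_p) 0 l = 0); last by rewrite mxE.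
by rewrite mul0r addr0 mulrC.
Qed.

Lemma chainB (R : realType) d p (k : 'rV[R]_p -> 'rV[R]_p -> R)
  (hkdiff : forall x x', differentiable (fun z : 'rV[R]_p * 'rV[R]_p => k z.1 z.2) (x, x'))
  (g g' : 'rV[R]_d -> 'rV[R]_p) (j : 'I_d) th :
  differentiable g th -> differentiable g' th ->
  partial (fun t => k (g t) (g' t)) j th =
  \sum_(l < p) (partial (fun u => k u (g' th)) l (g th) * partial (fun t => g t 0 l) j th
     + partial (fun u' => k (g th) u') l (g' th) * partial (fun t => g' t 0 l) j th).
Proof.
move=> dg dg'; rewrite {1}/partial (derive_k2 hkdiff (f := g) (g := g')) //.
rewrite lin_expand; apply: eq_bigr => l _.
rewrite (partial_coord _ _ dg) (partial_coord _ _ dg').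
rewrite (partial1 hkdiff (g th) (g' th) l) (partial2 hkdiff (g th) (g' th) l).
by congr (_ + _); apply: mulrC.
Qed.

Lemma diff_Lhat (R : realType) p n b (k : 'rV[R]_p -> 'rV[R]_p -> R)
  (hkdiff : forall x x', differentiable (fun z : 'rV[R]_p * 'rV[R]_p => k z.1 z.2) (x, x'))
  (y : 'I_n -> 'rV[R]_p) (U : 'M[R]_(b, p)) : differentiable (Lhat k y) U.
Proof.
rewrite (_ : Lhat k y = fun U => (- (2 / (n%:R * b%:R))) *
   (\sum_(i < n) \sum_(j < b) k (row j U) (y i)) + (b%:R * (b%:R - 1))^-1 *
   (\sum_(j < b) \sum_(j' < b | j' != j) k (row j U) (row j' U))); last by [].
apply: differentiable_lin2; apply: differentiable_sumseq => i;
  apply: differentiable_sumseq => j.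
- by apply: differentiable_k2 => //; try exact: differentiable_rowf; try exact: differentiable_cstf.
- by apply: differentiable_k2 => //; exact: differentiable_rowf.
Qed.

Lemma differentiable_coordf (R : realType) d p (g : 'rV[R]_d -> 'rV[R]_p) l th :
  differentiable g th -> differentiable (fun t => g t 0 l) th.
Proof.
move=> dg; rewrite (_ : (fun t => _) = (fun N : 'rV[R]_p => N 0 l) \o g); last by [].
apply: differentiable_comp => //; exact: differentiable_coord.
Qed.

Lemma diff_Gmat (R : realType) (V : Type) p d b (G : 'rV[R]_d -> V -> 'rV[R]_p)
  (v : 'I_b -> V) th :
  (forall kk, differentiable (fun t => G t (v kk)) th) ->
  differentiable (fun t => Gmat G t v) th.
Proof.
move=> hd.
rewrite (_ : (fun t => _) = fun t => \sum_(kk < b) \sum_(l < p)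
   (G t (v kk) 0 l) *: (delta_mx kk l : 'M[R]_(b, p))); last first.
  apply/funext => t; rewrite [LHS]matrix_sum_delta.
  by apply: eq_bigr => kk _; apply: eq_bigr => l _; rewrite /Gmat mxE.
apply: differentiable_sumseqW => kk; apply: differentiable_sumseqW => l.
apply: differentiableZl; exact: differentiable_coordf.
Qed.

Lemma row_Gmat (R : realType) (V : Type) p d b (G : 'rV[R]_d -> V -> 'rV[R]_p)
  (v : 'I_b -> V) t kk : row kk (Gmat G t v) = G t (v kk).
Proof. by apply/rowP => l; rewrite /Gmat mxE mxE. Qed.

Lemma Gmat_coord (R : realType) (V : Type) p d b (G : 'rV[R]_d -> V -> 'rV[R]_p)
  (v : 'I_b -> V) th (j : 'I_d) kk l :
  (forall kk, differentiable (fun t => G t (v kk)) th) ->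
  'd (fun t => Gmat G t v) th (delta_mx 0 j) kk l = partial (fun t => G t (v kk) 0 l) j th.
Proof.
move=> hd.
have dG := diff_Gmat hd.
have := derive_mx (diff_derivable (v := delta_mx 0 j) dG).
rewrite deriveE // => ->. rewrite [X in X = _]mxE /partial.
have -> : (fun t => Gmat G t v kk l) = (fun t => G t (v kk) 0 l).
  apply/funext => t. by rewrite /Gmat [X in X = _]mxE.
by [].
Qed.

Lemma phi_eq (R : realType) (V : Type) p d n b (k : 'rV[R]_p -> 'rV[R]_p -> R)
  (hkdiff : forall x x', differentiable (fun z : 'rV[R]_p * 'rV[R]_p => k z.1 z.2) (x, x'))
  (y : 'I_n -> 'rV[R]_p) (G : 'rV[R]_d -> V -> 'rV[R]_p) th (v : 'I_b -> V) (j : 'I_d) :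
  (forall w, differentiable (fun t => G t w) th) ->
  phi k y G th v 0 j =
  - (2 / (n%:R * b%:R)) * (\sum_(i < n) \sum_(kk < b) partial (fun t => k (G t (v kk)) (y i)) j th)
  + (b%:R * (b%:R - 1))^-1 *
    (\sum_(a < b) \sum_(c < b | c != a) partial (fun t => k (G t (v a)) (G t (v c))) j th).
Proof.
move=> hd.
have hdv : forall kk, differentiable (fun t => G t (v kk)) th by move=> kk; exact: hd.
have dG := diff_Gmat hdv.
set Gm := fun t => Gmat G t v.
set Gd := 'd Gm th (delta_mx 0 j).
rewrite /phi [X in X = _]mxE.
transitivity (\sum_(kk < b) \sum_(l < p) 'd (Lhat k y) (Gm th) (delta_mx kk l) * Gd kk l).
  apply: eq_bigr => kk _; apply: eq_bigr => l _.
  rewrite deriveE; last exact: diff_Lhat.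
  by rewrite /Gd Gmat_coord.
transitivity ('d (Lhat k y) (Gm th) Gd).
  rewrite [in RHS](matrix_sum_delta Gd) linear_sum; apply: eq_bigr => kk _.
  rewrite linear_sum; apply: eq_bigr => l _.
  by rewrite linearZ /= mulrC.
rewrite /Gd -(derive_compf (g := Lhat k y) _ dG); last exact: diff_Lhat.
rewrite (_ : (fun z => Lhat k y (Gm z)) = fun t =>
  - (2 / (n%:R * b%:R)) * (\sum_(i < n) \sum_(kk < b) k (G t (v kk)) (y i))
  + (b%:R * (b%:R - 1))^-1 *
    (\sum_(a < b) \sum_(c < b | c != a) k (G t (v a)) (G t (v c)))); last first.
  apply/funext => t; rewrite /Gm /Lhat.
  by under eq_bigr do under eq_bigr do rewrite row_Gmat;
     under [X in _ + _ * X]eq_bigr do under eq_bigr do rewrite !row_Gmat.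
apply: derive_val; apply: is_derive_lin2; apply: is_derive_sumseq => i;
  apply: is_derive_sumseq => c; apply: is_derive_der.
- by apply: differentiable_k2 => //; exact: differentiable_cstf.
- by apply: differentiable_k2.
Qed.

Lemma transfer (R : realType) (dO dV : measure_display) (Omega : measurableType dO)
  (V : measurableType dV) (PO : {measure set Omega -> \bar R})
  (P : {measure set V -> \bar R}) (phi : Omega -> V)
  (mphi : measurable_fun setT phi)
  (hP : forall A, measurable A -> PO (phi @^-1` A) = P A) (f : V -> R) :
  P.-integrable setT (EFin \o f) ->
  PO.-integrable setT (EFin \o (f \o phi)) /\
  (\int[PO]_w (f (phi w))%:E = \int[P]_v (f v)%:E)%E.
Proof.
move=> fi; have /integrableP [mf fint] := fi.
have eqm : forall A, measurable A -> A `<=` setT -> pushforward PO phi A = P A.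
  by move=> A mA _; exact: hP.
have mfr : measurable_fun setT f by apply/measurable_EFinP.
have intc : PO.-integrable setT (EFin \o (f \o phi)).
  apply/integrableP; split.
    by apply/measurable_EFinP; apply: measurableT_comp.
  have := @ge0_integral_pushforward _ _ _ _ _ phi mphi PO setT (fun v => `|(f v)%:E|%E)
     measurableT.
  rewrite preimage_setT => <- //.
  - by rewrite (eq_measure_integral P eqm).
  - by apply/measurable_EFinP; apply: measurableT_comp => //; exact: measurable_normr.
split => //.
have := @integral_pushforward _ _ _ _ _ phi mphi PO setT (EFin \o f) mf.
rewrite preimage_setT => <- //.
by rewrite (eq_measure_integral P eqm).
Qed.

Lemma iid_marg1 (R : realType) (dO dV : measure_display) (Omega : measurableType dO)
  (V : measurableType dV) (PO : probability Omega R) (P : probability V R) (b : nat)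
  (X : 'I_b -> Omega -> V) :
  iid PO P X -> forall kk A, measurable A -> PO (X kk @^-1` A) = P A.
Proof.
move=> [mX hX] kk A mA.
have := hX (fun kk' => if kk' == kk then A else setT).
have -> : \bigcap_(kk' in [set: 'I_b]) (X kk' @^-1` (if kk' == kk then A else setT)) =
   X kk @^-1` A.
  apply/seteqP; split => w.
    by move=> /(_ kk I); rewrite eqxx.
  by move=> Hw kk' _; case: eqP => [->|] //.
move=> ->; last by move=> kk'; case: (kk' == kk) => //; exact: measurableT.
rewrite (bigD1 kk) //= eqxx big1 ?mule1 // => kk' /negbTE ->.
exact: probability_setT.
Qed.

Lemma iid_marg2 (R : realType) (dO dV : measure_display) (Omega : measurableType dO)
  (V : measurableType dV) (PO : probability Omega R) (P : probability V R) (b : nat)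
  (X : 'I_b -> Omega -> V) :
  iid PO P X -> forall a c, a != c -> forall A B, measurable A -> measurable B ->
  PO ((fun w => (X a w, X c w)) @^-1` (A `*` B)) = (P A * P B)%E.
Proof.
move=> [mX hX] a c ac A B mA mB.
have := hX (fun kk' => if kk' == a then A else if kk' == c then B else setT).
have -> : \bigcap_(kk' in [set: 'I_b]) (X kk' @^-1`
     (if kk' == a then A else if kk' == c then B else setT)) =
   (fun w => (X a w, X c w)) @^-1` (A `*` B).
  apply/seteqP; split => w.
    move=> H; split => /=.
      by have := H a I; rewrite eqxx.
    by have := H c I; rewrite eq_sym (negbTE ac) eqxx.
  move=> [/= Ha Hc] kk' _; case: eqP => [->|] // _.
  by case: eqP => [->|].
move=> ->; last first.
  by move=> kk'; case: (kk' == a) => //; case: (kk' == c) => //; exact: measurableT.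
have ca : (c == a) = false by rewrite eq_sym (negbTE ac).
rewrite (bigD1 a) //= eqxx (bigD1 c) /=; last by rewrite ca.
rewrite ca eqxx big1 ?mule1 //.
move=> kk' /andP [ka kc]; rewrite (negbTE ka) (negbTE kc).
exact: probability_setT.
Qed.

Lemma iid_pair (R : realType) (dO dV : measure_display) (Omega : measurableType dO)
  (V : measurableType dV) (PO : probability Omega R) (P : probability V R) (b : nat)
  (X : 'I_b -> Omega -> V) :
  iid PO P X -> forall a c, a != c -> forall Y, measurable Y ->
  PO ((fun w => (X a w, X c w)) @^-1` Y) = (P \x P)%E Y.
Proof.
move=> hX a c ac Y mY.
have mXY : measurable_fun setT (fun w => (X a w, X c w)).
  by apply: measurable_fun_pair; apply: hX.1.
pose XY : {mfun Omega >-> (V * V)%type} :=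
  HB.pack (fun w => (X a w, X c w)) (isMeasurableFun.Build _ _ _ _ _ mXY).
have H : forall A B, measurable A -> measurable B ->
    distribution PO XY (A `*` B) = (P A * P B)%E.
  by move=> A B mA mB; rewrite /distribution /pushforward /=; exact: iid_marg2.
by rewrite (@product_measure_unique _ _ V V R P P (distribution PO XY) H Y mY).
Qed.

Definition IR (R : realType) (dO : measure_display) (Omega : measurableType dO)
  (PO : {measure set Omega -> \bar R}) (f : Omega -> R) (r : R) :=
  PO.-integrable setT (EFin \o f) /\ (\int[PO]_w (f w)%:E = r%:E)%E.

Lemma IR_lin2 (R : realType) (dO : measure_display) (Omega : measurableType dO)
  (PO : {measure set Omega -> \bar R}) f g r s a c :
  IR PO f r -> IR PO g s -> IR PO (fun w => a * f w + c * g w) (a * r + c * s).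
Proof.
move=> [fi fe] [gi ge].
have eqf : (EFin \o (fun w => a * f w + c * g w)) =
   ((fun w => a%:E * (EFin \o f) w) \+ (fun w => c%:E * (EFin \o g) w))%E.
  by apply/funext => w /=; rewrite EFinD !EFinM.
split.
  by rewrite eqf; apply: integrableD => //; apply: integrableZl.
have -> : (fun w => (a * f w + c * g w)%:E) =
   ((fun w => a%:E * (EFin \o f) w) \+ (fun w => c%:E * (EFin \o g) w))%E by [].
rewrite integralD //; try by apply: integrableZl.
rewrite !integralZl //.
by rewrite (_ : \int[PO]_x (EFin \o f) x = r%:E)%E // (_ : \int[PO]_x (EFin \o g) x = s%:E)%E.
Qed.

Lemma IR_sum (R : realType) (dO : measure_display) (Omega : measurableType dO)
  (PO : {measure set Omega -> \bar R}) (I : Type) (t : seq I) (P : pred I)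
  (f : I -> Omega -> R) (r : I -> R) :
  (forall i, P i -> IR PO (f i) (r i)) ->
  IR PO (fun w => \sum_(i <- t | P i) f i w) (\sum_(i <- t | P i) r i).
Proof.
move=> H; elim: t => [|a t [IHi IHe]].
  rewrite big_nil.
  have -> : (fun w => \sum_(i <- [::] | P i) f i w) = fun _ => 0.
    by apply/funext => w; rewrite big_nil.
  split.
    apply: (eq_integrable measurableT (cst 0%E)) => //; exact: integrable0.
  exact: integral0.
rewrite big_cons.
have -> : (fun w => \sum_(i <- a :: t | P i) f i w) = fun w =>
    if P a then 1 * f a w + 1 * \sum_(i <- t | P i) f i w else \sum_(i <- t | P i) f i w.
  by apply/funext => w; rewrite big_cons !mul1r.
case Pa: (P a); last by split.
rewrite -(mul1r (r a)) -[X in _ + X]mul1r.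
by apply: IR_lin2 => //; exact: H.
Qed.

Lemma alg2 (R : realType) (b : nat) (hb : (2 <= b)%N) (z : R) :
  (b%:R * (b%:R - 1))^-1 * \sum_(a < b) \sum_(c < b | c != a) z = z.
Proof.
have inner : forall a : 'I_b, \sum_(c < b | c != a) z = z * (b%:R - 1).
  move=> a; have H : \sum_(c < b) z = z * b%:R.
    by rewrite sumr_const cardT size_enum_ord mulr_natr.
  rewrite (bigD1 a) //= in H.
  rewrite mulrBr mulr1 -H; ring.
under eq_bigr do rewrite inner.
rewrite sumr_const cardT size_enum_ord -mulr_natr.
have b0 : b%:R != 0 :> R by rewrite pnatr_eq0 -lt0n (leq_trans _ hb).
have b1 : b%:R - 1 != 0 :> R.
  by rewrite subr_eq0 (eqr_nat R b 1) gtn_eqF.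
by field; apply/andP; split.
Qed.
Lemma alg1 (R : realType) (n b : nat) (hb : (2 <= b)%N) (x : 'I_n -> R) :
  (2 / (n%:R * b%:R)) * \sum_(i < n) \sum_(kk < b) x i = (2 / n%:R) * \sum_(i < n) x i.
Proof.
under eq_bigr do rewrite sumr_const cardT size_enum_ord.
rewrite sumrMnl -mulr_natr.
have b0 : b%:R != 0 :> R by rewrite pnatr_eq0 -lt0n (leq_trans _ hb).
have [n0|n0] := eqVneq (n%:R : R) 0.
  by rewrite n0 !mul0r invr0 !mulr0 !mul0r.
by field; apply/andP; split.
Qed.

Lemma IR_transfer (R : realType) (dO dV : measure_display) (Omega : measurableType dO)
  (V : measurableType dV) (PO : {measure set Omega -> \bar R})
  (P : {measure set V -> \bar R}) (phi : Omega -> V)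
  (mphi : measurable_fun setT phi)
  (hP : forall A, measurable A -> PO (phi @^-1` A) = P A) (f : V -> R) :
  P.-integrable setT (EFin \o f) -> IR PO (f \o phi) (Rintegral P setT f).
Proof.
move=> fi; have [ic ie] := transfer mphi hP fi.
split => //; rewrite ie /Rintegral fineK //.
exact: integrable_fin_num.
Qed.

Lemma is_derive_lin1 (R : realType) (U : normedModType R) (f g : U -> R^o) a
  df dg x v : is_derive x v f df -> is_derive x v g dg ->
  is_derive x v (fun z => a * f z + g z) (a * df + dg).
Proof.
move=> Hf Hg.
rewrite (_ : (fun z => _) = a \*: f + g); last by [].
exact: is_deriveD.
Qed.

Lemma norm_sum2 (R : realType) m q (P : 'I_m -> 'I_q -> bool) (F M : 'I_m -> 'I_q -> R) :
  (forall i c, P i c -> `|F i c| <= M i c) ->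
  `|\sum_(i < m) \sum_(c < q | P i c) F i c| <= \sum_(i < m) \sum_(c < q | P i c) M i c.
Proof.
move=> H; apply: (le_trans (ler_norm_sum _ _ _)); apply: ler_sum => i _.
apply: (le_trans (ler_norm_sum _ _ _)); apply: ler_sum => c Pc.
exact: H.
Qed.

Unset Implicit Arguments.

Theorem lemmaB4
  (R : realType)
  (dV : measure_display) (V : measurableType dV) (P : probability V R)
  (dO : measure_display) (Omega : measurableType dO) (PO : probability Omega R)
  (p d n b : nat) (hb : (2 <= b)%N)
  (y : 'I_n -> 'rV[R]_p)
  (k : 'rV[R]_p -> 'rV[R]_p -> R)
  (hk0 : forall x x', 0 <= k x x')
  (hksym : forall x x', k x x' = k x' x)
  (hkpd : pd_kernel k)
  (hkdiff : forall x x', differentiable (fun z : 'rV[R]_p * 'rV[R]_p => k z.1 z.2) (x, x'))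
  (Theta : set 'rV[R]_d) (hTheta : open Theta)
  (G : 'rV[R]_d -> V -> 'rV[R]_p)
  (hGdiff : forall v theta, Theta theta -> differentiable (fun t => G t v) theta)
  (* differentiation in theta interchangeable with expectation over v *)
  (hint1 : forall (i : 'I_n) theta, Theta theta ->
     P.-integrable setT (fun v => (k (G theta v) (y i))%:E))
  (hint2 : forall theta, Theta theta ->
     (P \x P)%E.-integrable setT (fun w => (k (G theta w.1) (G theta w.2))%:E))
  (hswap1 : forall (i : 'I_n) (j : 'I_d) theta, Theta theta ->
     P.-integrable setT (fun v => (partial (fun t => k (G t v) (y i)) j theta)%:E) /\
     is_derive theta (delta_mx 0 j)
       (fun t => Rintegral P setT (fun v => k (G t v) (y i)))
       (Rintegral P setT (fun v => partial (fun t => k (G t v) (y i)) j theta)))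
  (hswap2 : forall (j : 'I_d) theta, Theta theta ->
     (P \x P)%E.-integrable setT
        (fun w => (partial (fun t => k (G t w.1) (G t w.2)) j theta)%:E) /\
     is_derive theta (delta_mx 0 j)
       (fun t => Rintegral (P \x P)%E setT (fun w => k (G t w.1) (G t w.2)))
       (Rintegral (P \x P)%E setT
          (fun w => partial (fun t => k (G t w.1) (G t w.2)) j theta)))
  (prior : 'rV[R]_d -> R)
  (hprior0 : forall t, Theta t -> 0 < prior t)
  (hpriordiff : forall t, Theta t -> differentiable prior t)
  (omega : R) (homega : 0 < omega)
  (X : 'I_b -> Omega -> V) (hX : iid PO P X) :
  (forall theta, Theta theta -> forall j : 'I_d,
     (\int[PO]_w ((phi k y G theta (fun kk => X kk w)) 0 j)%:E)%E =
     (partial (MMDloss P k y G) j theta)%:E)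
  /\
  (forall (S : set V) (Q : 'I_d -> 'rV[R]_p -> 'rV[R]_d -> R) (Rb : 'I_d -> 'rV[R]_d -> R),
     measurable S -> P S = 1%E ->
     (forall (j : 'I_d) theta v yy, Theta theta -> S v ->
        `| \sum_(l < p) partial (fun u => k yy u) l (G theta v) *
                        partial (fun t => G t v 0 l) j theta | <= Q j yy theta) ->
     (forall (j : 'I_d) theta v v', Theta theta -> S v -> S v' ->
        `| \sum_(l < p) (partial (fun u => k u (G theta v')) l (G theta v) *
                          partial (fun t => G t v 0 l) j theta
                        + partial (fun u' => k (G theta v) u') l (G theta v') *
                          partial (fun t => G t v' 0 l) j theta) | <= Rb j theta) ->
     forall (v : 'I_b -> V) theta (nu : 'I_d -> R),
       (forall kk, S (v kk)) -> Theta theta -> (forall j, nu j = 1 \/ nu j = -1) ->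
       forall j : 'I_d,
         Num.max (nu j * (- partial (fun t => ln (prior t)) j theta
                          + omega * (phi k y G theta v) 0 j)) 0
         <= `| partial (fun t => ln (prior t)) j theta |
            + omega * (2 / n%:R) * (\sum_(i < n) Q j (y i) theta)
            + omega * Rb j theta).
Proof.
have hd : forall th, Theta th -> forall w, differentiable (fun t => G t w) th.
  by move=> th Th w; exact: hGdiff.
split.
- move=> th Th j.
  pose A i := fun w => partial (fun t => k (G t w) (y i)) j th.
  pose B := fun z : V * V => partial (fun t => k (G t z.1) (G t z.2)) j th.
  pose IA i := Rintegral P setT (A i).
  pose IB := Rintegral (P \x P)%E setT B.
  have HA : forall i kk, IR PO (fun w => A i (X kk w)) (IA i).
    move=> i kk.
    exact: (IR_transfer (phi := X kk) (hX.1 kk) (iid_marg1 hX kk) (hswap1 i j th Th).1).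
  have HB : forall a c, a != c -> IR PO (fun w => B (X a w, X c w)) IB.
    move=> a c ac.
    have mXY : measurable_fun setT (fun w => (X a w, X c w)).
      by apply: measurable_fun_pair; apply: hX.1.
    exact: (IR_transfer (phi := fun w => (X a w, X c w)) mXY (iid_pair hX ac)
      (hswap2 j th Th).1).
  have HM : IR PO (fun w => phi k y G th (fun kk => X kk w) 0 j)
     (- (2 / (n%:R * b%:R)) * (\sum_(i < n) \sum_(kk < b) IA i)
      + (b%:R * (b%:R - 1))^-1 * (\sum_(a < b) \sum_(c < b | c != a) IB)).
    have -> : (fun w => phi k y G th (fun kk => X kk w) 0 j) = (fun w =>
        - (2 / (n%:R * b%:R)) * (\sum_(i < n) \sum_(kk < b) A i (X kk w))
      + (b%:R * (b%:R - 1))^-1 * (\sum_(a < b) \sum_(c < b | c != a) B (X a w, X c w))).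
      by apply/funext => w; rewrite phi_eq //; exact: hd.
    apply: IR_lin2; apply: IR_sum => i _; apply: IR_sum => c ca.
      exact: HA.
    by apply: HB; rewrite eq_sym.
  have [_ ->] := HM.
  congr EFin.
  rewrite mulNr alg1 // alg2 //.
  rewrite /partial.
  have -> : MMDloss P k y G = fun t =>
     - (2 / n%:R) * (\sum_(i < n) Rintegral P setT (fun v => k (G t v) (y i)))
     + Rintegral (P \x P)%E setT (fun w => k (G t w.1) (G t w.2)) by [].
  have H1 : is_derive th (delta_mx 0 j)
      (fun t => \sum_(i < n) Rintegral P setT (fun v => k (G t v) (y i)))
      (\sum_(i < n) IA i).
    by apply: is_derive_sumseq => i; exact: (hswap1 i j th Th).2.
  have H2 := is_derive_lin1 (- (2 / n%:R)) H1 (hswap2 j th Th).2.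
  have E := @derive_val _ _ _ _ _ _ _ H2.
  by rewrite -mulNr; symmetry; exact: E.
- move=> S Q Rb mS PS hQ hRb v th nu Sv Th hnu j.
  rewrite phi_eq //; last exact: hd.
  set D := partial (fun t => ln (prior t)) j th.
  set Sq := \sum_(i < n) Q j (y i) th.
  have hA : forall i kk, `|partial (fun t => k (G t (v kk)) (y i)) j th| <= Q j (y i) th.
    move=> i kk; rewrite (chainA hkdiff (g := fun t => G t (v kk))); last exact: hd.
    rewrite (_ : (fun u => k u (y i)) = fun u => k (y i) u); last first.
      by apply/funext => u; rewrite hksym.
    exact: hQ.
  have hB : forall a c, `|partial (fun t => k (G t (v a)) (G t (v c))) j th| <= Rb j th.
    move=> a c.
    rewrite (chainB hkdiff (g := fun t => G t (v a)) (g' := fun t => G t (v c)));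
      try exact: hd.
    exact: hRb.
  have b0 : (0 < b)%N by apply: leq_trans hb.
  have Q0 : forall i, 0 <= Q j (y i) th.
    by move=> i; apply: le_trans (hA i (Ordinal b0)).
  have R0 : 0 <= Rb j th by apply: le_trans (hB (Ordinal b0) (Ordinal b0)).
  have Sq0 : 0 <= Sq by apply: sumr_ge0 => i _.
  have c20 : 0 <= (b%:R * (b%:R - 1))^-1 :> R.
    rewrite invr_ge0 mulr_ge0 // subr_ge0 ler1n.
    exact: ltnW.
  have c10 : 0 <= 2 / (n%:R * b%:R) :> R by rewrite divr_ge0 // mulr_ge0.
  set Ph := - (2 / (n%:R * b%:R)) * _ + _.
  have hphi : `|Ph| <= 2 / n%:R * Sq + Rb j th.
    rewrite -(alg1 hb (fun i => Q j (y i) th)) -[X in _ <= _ + X](alg2 hb (Rb j th)).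
    apply: (le_trans (ler_normD _ _)); apply: lerD.
      rewrite normrM normrN (ger0_norm c10); apply: ler_wpM2l => //.
      by apply: norm_sum2 => i kk _; exact: hA.
    rewrite normrM (ger0_norm c20); apply: ler_wpM2l => //.
    by apply: norm_sum2 => a c _; exact: hB.
  have hnu1 : `|nu j| = 1 by case: (hnu j) => ->; rewrite ?normrN normr1.
  rewrite ge_max; apply/andP; split.
    apply: (le_trans (ler_norm _)); rewrite normrM hnu1 mul1r.
    apply: (le_trans (ler_normD _ _)); rewrite normrN normrM (gtr0_norm homega).
    rewrite -addrA -mulrA -mulrDr; apply: lerD => //.
    by apply: ler_wpM2l => //; exact: ltW.
  apply: addr_ge0; last by apply: mulr_ge0 => //; exact: ltW.
  apply: addr_ge0 => //; apply: mulr_ge0 => //; apply: mulr_ge0; first exact: ltW.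
  by rewrite divr_ge0.
Qed.
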